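(* Let $S$ be an expanding automaton semigroup with a unique maximal subgroup $G$. Then $G$ is isomorphic to a self-similar group.
   Context: An expanding automaton is a quadruple $(Q,\Sigma,t,o)$ with $Q$ a finite set of states, $\Sigma$ a finite alphabet, $t:Q\times\Sigma\to Q$ and $o:Q\times\Sigma\to\Sigma^+$. Each state $q$ induces $q:\Sigma^*\to\Sigma^*$ by $q(\emptyset)=\emptyset$, $q(\sigma w)=o(q,\sigma)\,q'(w)$ with $q'=t(q,\sigma)$; an expanding automaton semigroup is the semigroup of maps generated under composition by the states. A subgroup of $S$ is a subsemigroup which is a group. A self-similar group is the group generated by the states of an invertible synchronous automaton (output in $\Sigma$, $o(q,\cdot)$ a permutation of $\Sigma$ for each $q$) with possibly infinitely many states. *)

(* Defs.v *)
From mathcomp Require Import all_boot.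
Set Implicit Arguments. Unset Strict Implicit. Unset Printing Implicit Defensive.

Record expanding_automaton (Q Sigma : finType) := ExpAut {
  ea_t : Q -> Sigma -> Q;
  ea_o : Q -> Sigma -> seq Sigma;
  ea_o_nonempty : forall q a, ea_o q a <> [::]
}.

Fixpoint ea_act (Q Sigma : finType) (A : expanding_automaton Q Sigma)
    (q : Q) (w : seq Sigma) : seq Sigma :=
  match w with
  | [::] => [::]
  | a :: w' => ea_o A q a ++ ea_act A (ea_t A q a) w'
  end.

Inductive in_ea_semigroup (Q Sigma : finType) (A : expanding_automaton Q Sigma)
  : (seq Sigma -> seq Sigma) -> Prop :=
| eas_gen : forall q, in_ea_semigroup A (ea_act A q)
| eas_comp : forall f g, in_ea_semigroup A f -> in_ea_semigroup A g ->
             in_ea_semigroup A (f \o g).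

(* A subgroup of S: a subsemigroup of S which is a group under composition
   (its identity element need not be the identity map). *)
Definition is_subgroup (Q Sigma : finType) (A : expanding_automaton Q Sigma)
    (H : (seq Sigma -> seq Sigma) -> Prop) : Prop :=
  (forall f, H f -> in_ea_semigroup A f) /\
  (forall f g, H f -> H g -> H (f \o g)) /\
  exists e, H e /\
    (forall f, H f -> e \o f = f /\ f \o e = f) /\
    (forall f, H f -> exists g, H g /\ f \o g = e /\ g \o f = e).

Definition is_maximal_subgroup (Q Sigma : finType) (A : expanding_automaton Q Sigma)
    (H : (seq Sigma -> seq Sigma) -> Prop) : Prop :=
  is_subgroup A H /\
  forall K, is_subgroup A K -> (forall f, H f -> K f) -> forall f, K f -> H f.

Definition unique_maximal_subgroup (Q Sigma : finType) (A : expanding_automaton Q Sigma)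
    (G : (seq Sigma -> seq Sigma) -> Prop) : Prop :=
  is_maximal_subgroup A G /\
  forall H, is_maximal_subgroup A H -> forall f, H f <-> G f.

(* Invertible synchronous automaton over a finite alphabet X with a possibly
   infinite set of states; each o(q, .) is a permutation of X. *)
Record ss_automaton (X : finType) := SSAut {
  ss_state : Type;
  ss_t : ss_state -> X -> ss_state;
  ss_o : ss_state -> X -> X;
  ss_o_bij : forall q, bijective (ss_o q)
}.

Fixpoint ss_act (X : finType) (B : ss_automaton X) (q : ss_state B)
    (w : seq X) : seq X :=
  match w with
  | [::] => [::]
  | a :: w' => ss_o q a :: @ss_act X B (ss_t q a) w'
  end.

Inductive in_ss_group (X : finType) (B : ss_automaton X)
  : (seq X -> seq X) -> Prop :=
| ssg_id : in_ss_group B id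
| ssg_gen : forall q, in_ss_group B (@ss_act X B q)
| ssg_comp : forall f g, in_ss_group B f -> in_ss_group B g ->
             in_ss_group B (f \o g)
| ssg_inv : forall f g, in_ss_group B f ->
            (forall w, f (g w) = w) -> (forall w, g (f w) = w) ->
            in_ss_group B g.

Definition group_iso_to_ss (Sigma X : finType) (G : (seq Sigma -> seq Sigma) -> Prop)
    (B : ss_automaton X) : Prop :=
  exists phi : (seq Sigma -> seq Sigma) -> (seq X -> seq X),
    (forall f, G f -> in_ss_group B (phi f)) /\
    (forall f g, G f -> G g -> phi f = phi g -> f = g) /\
    (forall h, in_ss_group B h -> exists f, G f /\ phi f = h) /\
    (forall f g, G f -> G g -> phi (f \o g) = phi f \o phi g).

Definition iso_to_self_similar_group (Sigma : finType)
    (G : (seq Sigma -> seq Sigma) -> Prop) : Prop :=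
  exists (X : finType) (B : ss_automaton X), group_iso_to_ss G B.

(* Main.v *)
Require Import Defs.
From mathcomp Require Import all_boot.
From Stdlib Require Import Classical FunctionalExtensionality ProofIrrelevance.
Set Implicit Arguments. Unset Strict Implicit. Unset Printing Implicit Defensive.

Section Basic.
Variables (Q Sigma : finType) (A : expanding_automaton Q Sigma).

Lemma act_cat q u v : ea_act A q (u ++ v) =
  ea_act A q u ++ ea_act A (foldl (ea_t A) q u) v.
Proof. by elim: u q => [|a u IH] q //=; rewrite IH catA. Qed.

Lemma S_sec f : in_ea_semigroup A f -> forall u, exists h,
  in_ea_semigroup A h /\ forall v, f (u ++ v) = f u ++ h v.
Proof.
elim=> [q|f1 g1 _ IHf _ IHg] u.
  exists (ea_act A (foldl (ea_t A) q u)); split; first exact: eas_gen.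
  by move=> v; rewrite act_cat.
have [hg [Shg Eg]] := IHg u.
have [hf [Shf Ef]] := IHf (g1 u).
exists (hf \o hg); split; first exact: eas_comp.
by move=> v /=; rewrite Eg Ef.
Qed.

Lemma S_nil f : in_ea_semigroup A f -> f [::] = [::].
Proof. by elim=> [q|f1 g1 _ IHf _ IHg] //=; rewrite IHg IHf. Qed.

Lemma S_size f : in_ea_semigroup A f -> forall w, size w <= size (f w).
Proof.
elim=> [q|f1 g1 _ IHf _ IHg] w /=.
  elim: w q => [|a w IH] q //=.
  rewrite size_cat -addn1 addnC leq_add //.
  by case E: (ea_o A q a) => //; case: (ea_o_nonempty E).
exact: leq_trans (IHg w) (IHf _).
Qed.

Definition secf (f : seq Sigma -> seq Sigma) u := fun v => drop (size (f u)) (f (u ++ v)).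

Lemma secf_spec f u v : in_ea_semigroup A f -> f (u ++ v) = f u ++ secf f u v.
Proof.
move=> Sf; have [h [_ E]] := S_sec Sf u.
by rewrite /secf !E drop_size_cat.
Qed.

Lemma secf_S f u : in_ea_semigroup A f -> in_ea_semigroup A (secf f u).
Proof.
move=> Sf; have [h [Sh E]] := S_sec Sf u.
have -> : secf f u = h by apply: functional_extensionality => v; rewrite /secf E drop_size_cat.
done.
Qed.

Lemma secf_comp f g u : in_ea_semigroup A f -> in_ea_semigroup A g ->
  secf (f \o g) u = secf f (g u) \o secf g u.
Proof.
move=> Sf Sg; apply: functional_extensionality => v.
rewrite /= {1}/secf /= (secf_spec u v Sg) (secf_spec (g u) (secf g u v) Sf).
by rewrite drop_size_cat.
Qed.

End Basic.

Section Group.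
Variables (Q Sigma : finType) (A : expanding_automaton Q Sigma).
Local Notation S := (in_ea_semigroup A).
Variables (G : (seq Sigma -> seq Sigma) -> Prop) (e : seq Sigma -> seq Sigma).
Hypothesis HGS : forall f, G f -> S f.
Hypothesis Hcomp : forall f g, G f -> G g -> G (f \o g).
Hypothesis He : G e.
Hypothesis Hid : forall f, G f -> e \o f = f /\ f \o e = f.
Hypothesis Hinv : forall f, G f -> exists g, G g /\ f \o g = e /\ g \o f = e.
Hypothesis Hmax : forall K, is_subgroup A K -> (forall f, G f -> K f) -> forall f, K f -> G f.
Hypothesis Huniq : forall H, is_maximal_subgroup A H -> forall f, H f <-> G f.

Lemma ptw (f g k : seq Sigma -> seq Sigma) x : f \o g = k -> f (g x) = k x.
Proof. by move<-. Qed.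

Definition Kc h f := S f /\ h \o f = f /\ f \o h = f /\
  exists g, S g /\ h \o g = g /\ g \o h = g /\ f \o g = h /\ g \o f = h.

Lemma Kc_sub h : S h -> h \o h = h -> is_subgroup A (Kc h).
Proof.
move=> Sh hh; split; first by move=> f [].
split.
  move=> f1 f2 [S1 [l1 [r1 [g1 [T1 [l1' [r1' [i1 j1]]]]]]]]
              [S2 [l2 [r2 [g2 [T2 [l2' [r2' [i2 j2]]]]]]]].
  split; first exact: eas_comp.
  split; first by apply: functional_extensionality => x /=; rewrite (ptw (f2 x) l1).
  split; first by apply: functional_extensionality => x /=; rewrite (ptw x r2).
  exists (g2 \o g1); split; first exact: eas_comp.
  split; first by apply: functional_extensionality => x /=; rewrite (ptw (g1 x) l2').
  split; first by apply: functional_extensionality => x /=; rewrite (ptw x r1').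
  split.
    apply: functional_extensionality => x /=.
    by rewrite (ptw (g1 x) i2) (ptw x l1') (ptw x i1).
  apply: functional_extensionality => x /=.
  by rewrite (ptw (f2 x) j1) (ptw (f2 x) r2') (ptw x j2).
exists h; split.
  by split=> //; split=> //; split=> //; exists h.
split; first by move=> f [_ [l [r _]]].
move=> f [Sf [l [r [g [Sg [l' [r' [i j]]]]]]]]; exists g; split=> //.
split=> //; split=> //; split=> //; exists f.
by [].
Qed.

Lemma Kc_max h : S h -> h \o h = h -> is_maximal_subgroup A (Kc h).
Proof.
move=> Sh hh; split; first exact: Kc_sub.
move=> K [KS [Kcomp [e' [Ke' [Kid Kinv]]]]] sub f Kf.
have Kh : K h by apply: sub; split=> //; split=> //; split=> //; exists h.
have [h' [Kh' [i j]]] := Kinv _ Kh.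
have ee : e' = h.
  apply: functional_extensionality => x.
  rewrite -(ptw x j); transitivity (h' (h (h x))); first by rewrite (ptw x hh).
  by rewrite (ptw (h x) j) (ptw x (Kid _ Kh).1).
rewrite -ee; split; first exact: KS.
split; first exact: (Kid _ Kf).1.
split; first exact: (Kid _ Kf).2.
have [g [Kg [i' j']]] := Kinv _ Kf.
exists g; split; first exact: KS.
split; first exact: (Kid _ Kg).1.
split; first exact: (Kid _ Kg).2.
by split.
Qed.

Lemma idem_e h : S h -> h \o h = h -> h = e.
Proof.
move=> Sh hh.
have Gh : G h.
  apply/(Huniq (Kc_max Sh hh)).
  by split=> //; split=> //; split=> //; exists h.
have [h' [Gh' [i j]]] := Hinv Gh.
apply: functional_extensionality => x.
rewrite -(ptw x j); symmetry; transitivity (h' (h (h x))); first by rewrite (ptw x hh).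
by rewrite (ptw (h x) j) (ptw x (Hid Gh).1).
Qed.

Lemma ee : e \o e = e. Proof. exact: (Hid He).1. Qed.

Lemma KeG f : Kc e f -> G f.
Proof.
apply: Hmax; first exact: Kc_sub (HGS He) ee.
move=> g Gg; split; first exact: HGS.
split; first exact: (Hid Gg).1.
split; first exact: (Hid Gg).2.
have [g' [Gg' [i j]]] := Hinv Gg.
exists g'; split; first exact: HGS.
split; first exact: (Hid Gg').1.
split; first exact: (Hid Gg').2.
by split.
Qed.

Definition T w := e w = w.

Lemma e_cat u v : T u -> e (u ++ v) = u ++ e v.
Proof.
move=> Tu.
have [h [Sh E]] := S_sec (HGS He) u.
suff he : h = e by rewrite E Tu he.
apply: idem_e => //.
apply: functional_extensionality => v' /=.
have := ptw (u ++ v') ee; rewrite /= E Tu E Tu.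
by move/eqP; rewrite eqseq_cat // => /andP [_ /eqP].
Qed.

Lemma G_T f w : G f -> T (f w).
Proof. by move=> Gf; rewrite /T (ptw w (Hid Gf).1). Qed.

Lemma G_fe f w : G f -> f (e w) = f w.
Proof. by move=> Gf; rewrite (ptw w (Hid Gf).2). Qed.

Lemma G_size f w : G f -> T w -> size (f w) = size w.
Proof.
move=> Gf Tw; have [g [Gg [i j]]] := Hinv Gf.
apply/eqP; rewrite eqn_leq (S_size (HGS Gf)) andbT.
have := S_size (HGS Gg) (f w).
by rewrite (ptw w j) /= Tw.
Qed.

Lemma T_unit u v : T u -> T (u ++ v) -> T v.
Proof.
rewrite /T => Tu; rewrite e_cat // => /eqP.
by rewrite eqseq_cat // => /andP [_ /eqP].
Qed.

Lemma T_cat u v : T u -> T v -> T (u ++ v).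
Proof. by move=> Tu Tv; rewrite /T e_cat // Tv. Qed.

Lemma sec_abs f u h : G f -> T u -> (forall v, f (u ++ v) = f u ++ h v) ->
  (forall v, e (h v) = h v) /\ (forall v, h (e v) = h v).
Proof.
move=> Gf Tu E; split=> v.
  have := G_T (u ++ v) Gf; rewrite /T E e_cat; last exact: G_T.
  by move/eqP; rewrite eqseq_cat // => /andP [_ /eqP].
have := G_fe (u ++ v) Gf; rewrite e_cat // !E.
by move/eqP; rewrite eqseq_cat // => /andP [_ /eqP].
Qed.

Lemma sec_G f u : G f -> T u -> G (secf f u).
Proof.
move=> Gf Tu.
have Sf := HGS Gf.
have [g [Gg [i j]]] := Hinv Gf.
have Sg := HGS Gg.
have Tfu : T (f u) by apply: G_T.
have gfu : g (f u) = u by rewrite (ptw u j).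
have Ef := fun v => secf_spec u v Sf.
have Eg := fun v => secf_spec (f u) v Sg.
have [a1 a2] := sec_abs Gf Tu Ef.
have [b1 b2] := sec_abs Gg Tfu Eg.
apply: KeG; split; first exact: secf_S.
split; first by apply: functional_extensionality => v; apply: a1.
split; first by apply: functional_extensionality => v; apply: a2.
exists (secf g (f u)); split; first exact: secf_S.
split; first by apply: functional_extensionality => v; apply: b1.
split; first by apply: functional_extensionality => v; apply: b2.
split.
  apply: functional_extensionality => v /=.
  have := ptw (f u ++ v) i; rewrite /= Eg gfu Ef e_cat //.
  by move/eqP; rewrite eqseq_cat // => /andP [_ /eqP].
apply: functional_extensionality => v /=.
have := ptw (u ++ v) j; rewrite /= Ef Eg gfu e_cat //.
by move/eqP; rewrite eqseq_cat // => /andP [_ /eqP].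
Qed.

End Group.

Section Atoms.
Variables (Q Sigma : finType) (A : expanding_automaton Q Sigma).
Local Notation S := (in_ea_semigroup A).
Variables (G : (seq Sigma -> seq Sigma) -> Prop) (e : seq Sigma -> seq Sigma).
Hypothesis HGS : forall f, G f -> S f.
Hypothesis Hcomp : forall f g, G f -> G g -> G (f \o g).
Hypothesis He : G e.
Hypothesis Hid : forall f, G f -> e \o f = f /\ f \o e = f.
Hypothesis Hinv : forall f, G f -> exists g, G g /\ f \o g = e /\ g \o f = e.
Hypothesis Hmax : forall K, is_subgroup A K -> (forall f, G f -> K f) -> forall f, K f -> G f.
Hypothesis Huniq : forall H, is_maximal_subgroup A H -> forall f, H f <-> G f.

Local Notation T := (T e).
Local Notation e_cat := (e_cat HGS He Hid Hinv Huniq).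
Local Notation T_unit := (T_unit HGS He Hid Hinv Huniq).
Local Notation T_cat := (T_cat HGS He Hid Hinv Huniq).
Local Notation G_size := (G_size HGS Hid Hinv).

Definition atom x := T x /\ x <> [::] /\
  forall y z, x = y ++ z -> T y -> y = [::] \/ z = [::].

Lemma atom_T x : atom x -> T x. Proof. by case. Qed.

Lemma atom_e1 x : atom x -> exists c, x = e [:: c].
Proof.
case: x => [[_ [//]]|c x'] [Tx [_ Hat]].
exists c.
have [h [_ E]] := S_sec (HGS He) [:: c].
have Tc : T (e [:: c]) by rewrite /T (ptw _ (Hid He).1).
have nc : e [:: c] <> [::].
  move=> E0; have := S_size (HGS He) [:: c]; by rewrite E0.
have xE : c :: x' = e [:: c] ++ h x' by rewrite -Tx -E.
case: (Hat _ _ xE Tc) => // h0.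
by rewrite xE h0 cats0.
Qed.

Lemma T_fact n : forall w, size w <= n -> T w ->
  exists xs, (forall x, x \in xs -> atom x) /\ w = flatten xs.
Proof.
elim: n => [|n IH] w.
  by rewrite leqn0 size_eq0 => /eqP -> _; exists [::].
case: w => [|c w'] Hs Tw; first by exists [::].
case: (classic (exists y z, c :: w' = y ++ z /\ T y /\ y <> [::] /\ z <> [::])).
  move=> [y [z [E [Ty [ny nz]]]]].
  have Tz : T z by apply: (T_unit Ty); rewrite -E.
  have py : 0 < size y by case: (y) ny.
  have pz : 0 < size z by case: (z) nz.
  have Hsum : size y + size z <= n.+1 by rewrite -size_cat -E.
  have sy : size y <= n.
    by rewrite -ltnS; apply: leq_trans Hsum; rewrite -addn1 leq_add2l.
  have sz : size z <= n.
    by rewrite -ltnS; apply: leq_trans Hsum; rewrite -add1n leq_add2r.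
  have [ys [ay Ey]] := IH _ sy Ty.
  have [zs [az Ez]] := IH _ sz Tz.
  exists (ys ++ zs); split; last by rewrite flatten_cat -Ey -Ez.
  by move=> x; rewrite mem_cat => /orP [/ay|/az].
move=> Hno; exists [:: c :: w']; split; last by rewrite /= cats0.
move=> x; rewrite inE => /eqP ->; split=> //; split=> // y z E Ty.
case: (classic (y = [::])) => [|ny]; first by left.
case: (classic (z = [::])) => [|nz]; first by right.
by case: Hno; exists y, z.
Qed.

Lemma atoms_sub (C : seq (seq Sigma)) :
  exists L : seq (seq Sigma), forall x, x \in L <-> x \in C /\ atom x.
Proof.
elim: C => [|c C [L HL]]; first by exists [::] => x; rewrite in_nil; split=> // [[]].
case: (classic (atom c)) => Hc.
  exists (c :: L) => x; rewrite inE; split.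
    case/orP => [/eqP -> | /HL [xC ax]]; split; rewrite ?inE ?eqxx ?xC ?orbT //.
  rewrite inE => [[/orP [/eqP -> | xC] ax]]; first by rewrite eqxx.
  by apply/orP; right; apply/HL; split.
exists L => x; split.
  by move/HL => [xC ax]; rewrite inE xC orbT.
rewrite inE => [[/orP [/eqP Ex | xC] ax]]; first by subst.
by apply/HL.
Qed.

Lemma atoms_list : exists L : seq (seq Sigma), forall x, x \in L <-> atom x.
Proof.
have [L HL] := atoms_sub [seq e [:: a] | a <- enum Sigma].
exists L => x; rewrite HL; split; first by case.
move=> Hx; split=> //; have [c ->] := atom_e1 Hx.
by apply: map_f; rewrite mem_enum.
Qed.

End Atoms.

Section Build.
Variables (Q Sigma : finType) (A : expanding_automaton Q Sigma).
Local Notation S := (in_ea_semigroup A).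
Local Notation W := (seq Sigma).
Variables (G : (seq Sigma -> seq Sigma) -> Prop) (e : seq Sigma -> seq Sigma).
Hypothesis HGS : forall f, G f -> S f.
Hypothesis Hcomp : forall f g, G f -> G g -> G (f \o g).
Hypothesis He : G e.
Hypothesis Hid : forall f, G f -> e \o f = f /\ f \o e = f.
Hypothesis Hinv : forall f, G f -> exists g, G g /\ f \o g = e /\ g \o f = e.
Hypothesis Hmax : forall K, is_subgroup A K -> (forall f, G f -> K f) -> forall f, K f -> G f.
Hypothesis Huniq : forall H, is_maximal_subgroup A H -> forall f, H f <-> G f.
Variable L : seq (seq Sigma).
Hypothesis HL : forall x, x \in L <-> atom e x.

Local Notation T := (T e).
Local Notation atom := (atom e).

Lemma secG f u : G f -> T u -> G (secf f u).
Proof. exact: (sec_G HGS He Hid Hinv Hmax Huniq). Qed.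
Lemma TunitL u v : T u -> T (u ++ v) -> T v.
Proof. exact: (T_unit HGS He Hid Hinv Huniq). Qed.
Lemma GsizeL f w : G f -> T w -> size (f w) = size w.
Proof. exact: (G_size HGS Hinv). Qed.

Lemma G_atom f x : G f -> atom x -> atom (f x).
Proof.
move=> Gf [Tx [nx Hat]]; split; first exact: (G_T Hid x Gf).
split.
  move=> E0; apply: nx; apply: size0nil; by rewrite -(GsizeL Gf Tx) E0.
move=> y z E Ty.
have [g [Gg [i j]]] := Hinv Gf.
have Tz : T z by apply: (TunitL Ty); rewrite -E; exact: (G_T Hid x Gf).
have xE : x = g y ++ secf g y z.
  by rewrite -(secf_spec _ _ (HGS Gg)) -E (ptw x j).
case: (Hat _ _ xE (G_T Hid y Gg)) => h0; [left|right]; apply: size0nil.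
  by rewrite -(GsizeL Gg Ty) h0.
by rewrite -(GsizeL (secG Gg Ty) Tz) h0.
Qed.

Local Notation X := (seq_sub L).

Definition oo (f : W -> W) (x : X) : X := insubd x (f (val x)).

Lemma valX_atom (x : X) : atom (val x).
Proof. by apply/HL; apply: ssvalP. Qed.

Lemma oo_val f x : G f -> val (oo f x) = f (val x).
Proof.
move=> Gf; rewrite /oo val_insubd.
by have /HL -> := G_atom Gf (valX_atom x).
Qed.

Fixpoint act (f : W -> W) (xs : seq X) : seq X :=
  match xs with
  | [::] => [::]
  | x :: xs' => oo f x :: act (secf f (val x)) xs'
  end.

Definition St := {f : W -> W | G f}.

Definition tt (s : St) (x : X) : St :=
  exist G (secf (sval s) (val x)) (secG (proj2_sig s) (atom_T (valX_atom x))).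

Lemma oo_bij (s : St) : bijective (oo (sval s)).
Proof.
case: s => f Gf /=.
have [g [Gg [i j]]] := Hinv Gf.
exists (oo g) => x; apply: val_inj; rewrite !oo_val //.
  by rewrite (ptw _ j); apply: atom_T (valX_atom x).
by rewrite (ptw _ i); apply: atom_T (valX_atom x).
Qed.

Definition B : ss_automaton X := @SSAut X St tt (fun s => oo (sval s)) oo_bij.

Lemma ss_act_act (s : St) xs : @ss_act _ B s xs = act (sval s) xs.
Proof. by elim: xs s => //= x xs IH s; rewrite IH. Qed.

Lemma decode f xs : G f -> flatten (map val (act f xs)) = f (flatten (map val xs)).
Proof.
elim: xs f => [|x xs IH] f Gf /=; first by rewrite (S_nil (HGS Gf)).
rewrite oo_val // IH; last exact: secG Gf (atom_T (valX_atom x)).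
by rewrite -(secf_spec _ _ (HGS Gf)).
Qed.

Lemma act_comp f g xs : G f -> G g -> act (f \o g) xs = act f (act g xs).
Proof.
elim: xs f g => [|x xs IH] f g Gf Gg //=.
have Gfg := Hcomp Gf Gg.
have Tx := atom_T (valX_atom x).
have vg := oo_val x Gg.
congr (_ :: _).
  by apply: val_inj; rewrite !oo_val // vg.
rewrite vg (secf_comp _ (HGS Gf) (HGS Gg)) IH //; last exact: secG Gg Tx.
by apply: secG Gf _; exact: (G_T Hid (val x) Gg).
Qed.

Lemma act_e xs : act e xs = xs.
Proof.
elim: xs => //= x xs IH.
have Tx := atom_T (valX_atom x).
have se : secf e (val x) = e.
  apply: functional_extensionality => v.
  by rewrite /secf (e_cat HGS He Hid Hinv Huniq _ Tx) Tx drop_size_cat.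
rewrite se IH; congr (_ :: _); apply: val_inj; rewrite oo_val //.
Qed.

Lemma lift (xs : seq (seq Sigma)) : (forall x, x \in xs -> atom x) ->
  exists ys : seq X, map val ys = xs.
Proof.
elim: xs => [|x xs IH] H; first by exists [::].
have Hx : x \in L by apply/HL; apply: H; rewrite inE eqxx.
have [ys E] := IH (fun y hy => H y (introT orP (or_intror hy))).
by exists ((Sub x Hx : X) :: ys); rewrite /= E.
Qed.

Lemma iso : group_iso_to_ss G B.
Proof.
exists act; split.
  move=> f Gf.
  have -> : act f = @ss_act _ B (exist G f Gf).
    by apply: functional_extensionality => xs; rewrite ss_act_act.
  exact: ssg_gen.
split.
  move=> f g Gf Gg E; apply: functional_extensionality => w.
  rewrite -(G_fe Hid w Gf) -(G_fe Hid w Gg).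
  have Tw : T (e w) by exact: (G_T Hid w He).
  have [xs [ax Ex]] := T_fact HGS He Hid Hinv Huniq (leqnn _) Tw.
  have [ys Ey] := lift ax.
  by rewrite Ex -Ey -!decode // E.
split.
  move=> h; elim=> [|q|f1 g1 _ [a [Ga Ea]] _ [b [Gb Eb]]|f1 g1 _ [a [Ga Ea]] i j].
  - exists e; split=> //; apply: functional_extensionality => xs; exact: act_e.
  - exists (sval q); split; first exact: proj2_sig.
    by apply: functional_extensionality => xs; rewrite ss_act_act.
  - exists (a \o b); split; first exact: Hcomp.
    by apply: functional_extensionality => xs; rewrite act_comp // -Ea -Eb.
  - have [a' [Ga' [ii jj]]] := Hinv Ga.
    exists a'; split=> //; apply: functional_extensionality => w.
    by rewrite -{1}(i w) -Ea -act_comp // jj act_e.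
move=> f g Gf Gg; apply: functional_extensionality => xs; exact: act_comp.
Qed.

End Build.

Theorem mainTheorem12 (Q Sigma : finType) (A : expanding_automaton Q Sigma)
    (G : (seq Sigma -> seq Sigma) -> Prop) :
  unique_maximal_subgroup A G -> iso_to_self_similar_group G.
Proof.
move=> [[[HS [Hc [e [He [Hid Hinv]]]]] Hmax] Huniq].
have [L HL] := atoms_list HS He Hid.
eexists; eexists; exact: (iso HS Hc He Hid Hinv Hmax Huniq HL).
Qed.
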